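(* Let $f\in\mathrm{Conv}_0^+(\mathbb{R}^n,\mathbb{R})$ be a smooth ($C^\infty$) function. If $0\ne y=df(x_0)$ for some $x_0\in\mathbb{R}^n$, then (1) $|f^*(y)|\le(1+2|x_0|)\sup_{|x|\le|x_0|+1}|f(x)|$, and (2) $|y|\le 2\sup_{|x|\le|x_0|+1}|f(x)|$. Moreover, for $R\ge0$ and $y\in\mathbb{R}^n$, $f^*(y)\le(1+2R)\sup_{|x|\le R+1}|f(x)|$ implies $|y|\le 2\sup_{|x|\le R+1}|f(x)|$.
   Context: $\mathrm{Conv}(\mathbb{R}^n,\mathbb{R})$ denotes finite-valued convex functions on $\mathbb{R}^n$. $\mathrm{Conv}_0^+(\mathbb{R}^n,\mathbb{R})$ is the set of $f\in\mathrm{Conv}(\mathbb{R}^n,\mathbb{R})$ with $f(0)=0<f(x)$ for all $x\ne0$ such that $f-\lambda\frac{|\cdot|^2}{2}$ is convex for some $\lambda>0$. $f^*(y)=\sup_{x\in\mathbb{R}^n}(\langle y,x\rangle-f(x))$ is the Legendre transform, and $df(x_0)$ is the gradient of $f$ at $x_0$. *)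

(* Defs.v *)
From HB Require Import structures.
From mathcomp Require Import all_boot all_order all_algebra.
From mathcomp Require Import all_classical all_reals all_analysis.
Set Implicit Arguments. Unset Strict Implicit. Unset Printing Implicit Defensive.
Import Order.TTheory GRing.Theory Num.Theory.
Import numFieldNormedType.Exports.
Local Open Scope ring_scope.
Local Open Scope classical_set_scope.

Section Defs.
Variables (R : realType) (n : nat).
Local Notation V := 'rV[R]_n.

Definition dotv (u v : V) : R := \sum_(i < n) u 0 i * v 0 i.
Definition enorm (v : V) : R := Num.sqrt (dotv v v).

Definition convex_fun (f : V -> R) : Prop :=
  forall (x y : V) (t : R), 0 <= t <= 1 ->
    f (t *: x + (1 - t) *: y) <= t * f x + (1 - t) * f y.

Definition Conv0p (f : V -> R) : Prop :=
  convex_fun f /\ f 0 = 0 /\ (forall x, x != 0 -> 0 < f x) /\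
  exists lam : R, 0 < lam /\ convex_fun (fun x => f x - lam * (enorm x ^+ 2) / 2).

Fixpoint iterD (vs : seq V) (f : V -> R) : V -> R :=
  match vs with
  | [::] => f
  | v :: vs' => fun x => 'D_v (iterD vs' f) x
  end.

Definition smooth (f : V -> R) : Prop :=
  forall vs : seq V, continuous (iterD vs f) /\
    (forall (v x : V), derivable (iterD vs f) x v).

Definition is_gradient (f : V -> R) (x0 y : V) : Prop :=
  differentiable f x0 /\ forall v : V, 'd f x0 v = dotv y v.

Definition legendre (f : V -> R) (y : V) : \bar R :=
  ereal_sup [set ((dotv y x - f x)%:E) | x in [set: V]].

Definition supball (f : V -> R) (r : R) : \bar R :=
  ereal_sup [set (`|f x|%:E) | x in [set x : V | enorm x <= r]].
End Defs.

(* Main.v *)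
Require Import Defs.
From HB Require Import structures.
From mathcomp Require Import all_boot all_order all_algebra.
From mathcomp Require Import all_classical all_reals all_analysis.
From mathcomp Require Import lra.
Import Order.TTheory GRing.Theory Num.Theory.
Import numFieldNormedType.Exports.
Local Open Scope ring_scope.

Section H.
Variables (R : realType) (n : nat).
Local Notation V := 'rV[R]_n.

Lemma dotvC (u v : V) : dotv u v = dotv v u.
Proof. by apply: eq_bigr => i _; rewrite mulrC. Qed.
Lemma dotvDl (u w v : V) : dotv (u + w) v = dotv u v + dotv w v.
Proof. by rewrite /dotv -big_split; apply: eq_bigr => i _; rewrite !mxE mulrDl. Qed.
Lemma dotvZl a (u v : V) : dotv (a *: u) v = a * dotv u v.
Proof. by rewrite /dotv mulr_sumr; apply: eq_bigr => i _; rewrite !mxE mulrA. Qed.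
Lemma dotvNl (u v : V) : dotv (- u) v = - dotv u v.
Proof. by rewrite -scaleN1r dotvZl mulN1r. Qed.
Lemma dotvDr (u w v : V) : dotv v (u + w) = dotv v u + dotv v w.
Proof. by rewrite dotvC dotvDl !(dotvC v). Qed.
Lemma dotvZr a (u v : V) : dotv v (a *: u) = a * dotv v u.
Proof. by rewrite dotvC dotvZl dotvC. Qed.
Lemma dotvNr (u v : V) : dotv v (- u) = - dotv v u.
Proof. by rewrite dotvC dotvNl dotvC. Qed.
Lemma dotvvge0 (u : V) : 0 <= dotv u u.
Proof. by apply: sumr_ge0 => i _; rewrite -expr2 sqr_ge0. Qed.
Lemma dotvv0 (u : V) : dotv u u = 0 -> u = 0.
Proof.
move=> /eqP; rewrite psumr_eq0; last by move=> i _; rewrite -expr2 sqr_ge0.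
move=> /allP H; apply/rowP => i; rewrite !mxE.
have := H i (mem_index_enum _); rewrite /= -expr2 sqrf_eq0 => /eqP.
done.
Qed.
Lemma enorm_ge0 (u : V) : 0 <= enorm u.
Proof. exact: sqrtr_ge0. Qed.
Lemma enorm_sq (u : V) : enorm u ^+ 2 = dotv u u.
Proof. by rewrite sqr_sqrtr // dotvvge0. Qed.
Lemma enorm_eq0 (u : V) : enorm u = 0 -> u = 0.
Proof. by move=> h; apply: dotvv0; rewrite -enorm_sq h expr0n. Qed.
Lemma enorm0 : enorm (0 : V) = 0.
Proof. by rewrite /enorm /dotv big1 ?sqrtr0 // => i _; rewrite mxE mul0r. Qed.
Lemma enormZ a (u : V) : enorm (a *: u) = `|a| * enorm u.
Proof.
by rewrite /enorm dotvZl dotvZr mulrA -expr2 sqrtrM ?sqr_ge0 // sqrtr_sqr.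
Qed.

Lemma dotv0l (v : V) : dotv 0 v = 0.
Proof. by rewrite -(scale0r (0:V)) dotvZl mul0r. Qed.
Lemma dotv0r (v : V) : dotv v 0 = 0.
Proof. by rewrite dotvC dotv0l. Qed.
Lemma CS (u v : V) : dotv u v <= enorm u * enorm v.
Proof.
have [u0|] := eqVneq (enorm u) 0.
  by rewrite (enorm_eq0 _ u0) dotv0l enorm0 mul0r.
have [v0|] := eqVneq (enorm v) 0.
  by rewrite (enorm_eq0 _ v0) dotv0r enorm0 mulr0.
move=> nv nu.
have := dotvvge0 (enorm v *: u - enorm u *: v).
rewrite !(dotvDl, dotvDr, dotvNl, dotvNr, dotvZl, dotvZr) -!enorm_sq (dotvC v u).
have a0 : 0 < enorm u by rewrite lt_neqAle eq_sym nu enorm_ge0.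
have b0 : 0 < enorm v by rewrite lt_neqAle eq_sym nv enorm_ge0.
move: (dotv u v) (enorm u) (enorm v) a0 b0 => d a b a0 b0 H.
have ab : 0 < a * b by rewrite mulr_gt0.
rewrite -subr_ge0; rewrite -(pmulr_rge0 _ ab); nra.
Qed.

Lemma CSabs (u v : V) : `|dotv u v| <= enorm u * enorm v.
Proof.
rewrite ler_norml CS andbT lerNl -dotvNr.
apply: (le_trans (CS _ _)); rewrite -scaleN1r enormZ normrN1 mul1r //.
Qed.
End H.
Section H2.
Variables (R : realType) (n : nat).
Local Notation V := 'rV[R]_n.

Lemma grad_ineq (f : V -> R) x0 y : convex_fun f -> is_gradient f x0 y ->
  forall x, dotv y (x - x0) <= f x - f x0.
Proof.
move=> cf [df dy] x; set h := x - x0.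
have D := @diff_derivable _ _ _ _ _ h df.
rewrite -dy -deriveE //.
rewrite leNgt; apply/negP => cD.
have := @cvgr_gt _ _ _ _ _ _ D _ cD.
move=> /(_ _) H; move: H.
move=> /nbhs_ballP[e /= e0 He].
pose t := Num.min (e/2) 1.
have t0 : 0 < t by rewrite lt_min ltr01 divr_gt0.
have t1 : t <= 1 by rewrite ge_min lexx orbT.
have te : ball 0 e t.
  rewrite /ball /= sub0r normrN gtr0_norm //.
  by rewrite gt_min ltr_pdivrMr // ltr_pMr // ltr1n.
have := He t te (lt0r_neq0 t0).
have -> : t *: h + x0 = t *: x + (1 - t) *: x0.
  by rewrite /h scalerBr scalerBl scale1r -addrA [_ + x0]addrC.
have := cf x x0 t; rewrite (ltW t0) t1 => /(_ isT) C.
change (t^-1 *: ?a) with (t^-1 * a).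
rewrite ltr_pdivlMl // ltNge => /negP; apply.
by rewrite mulrBr; lra.
Qed.
End H2.
Section H3.
Variables (R : realType) (n : nat).
Local Notation V := 'rV[R]_n.

Lemma supball_ge (f : V -> R) r x : enorm x <= r -> ((`|f x|)%:E <= supball f r)%E.
Proof. by move=> h; apply: ereal_sup_ubound; exists x. Qed.

Lemma legendre_ge (f : V -> R) y x : ((dotv y x - f x)%:E <= legendre f y)%E.
Proof. by apply: ereal_sup_ubound; exists x. Qed.

Lemma legendre_le (f : V -> R) y c : (forall x, dotv y x - f x <= c) ->
  (legendre f y <= c%:E)%E.
Proof. by move=> h; apply: ge_ereal_sup => _ [x _ <-]; rewrite lee_fin. Qed.

Lemma sup_cases (f : V -> R) r : 0 <= r ->
  supball f r = +oo%E \/ exists m, supball f r = m%:E /\ 0 <= m /\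
     (forall x, enorm x <= r -> `|f x| <= m).
Proof.
move=> r0; have := @supball_ge f r 0; rewrite enorm0 => /(_ r0).
case E: (supball f r) => [m| |] h; last by [].
- right; exists m; split => //; split; first by move: h; rewrite lee_fin; apply: le_trans.
  
  by move=> x hx; have := @supball_ge f r x hx; rewrite E lee_fin.
- by left.
Qed.

Lemma lower_y (f : V -> R) r y m : 0 <= r -> y != 0 ->
  (forall x, enorm x <= r + 1 -> `|f x| <= m) ->
  (((r + 1) * enorm y - m)%:E <= legendre f y)%E.
Proof.
move=> r0 y0 hm.
have ny : 0 < enorm y.
  rewrite lt_neqAle enorm_ge0 andbT eq_sym; apply/eqP => /enorm_eq0 /eqP.
  by rewrite (negbTE y0).
pose x := ((r + 1) / enorm y) *: y.
apply: le_trans (legendre_ge f y x); rewrite lee_fin.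
have -> : dotv y x = (r + 1) * enorm y.
  rewrite /x dotvZr -enorm_sq expr2 mulrA divfK //; lra.
have : enorm x <= r + 1.
  rewrite /x enormZ ger0_norm ?divfK //; [lra | apply: divr_ge0 => //; lra].
move/hm => /ler_normlP [] _ ?; lra.
Qed.

Lemma part2 (f : V -> R) r y : Conv0p f -> 0 <= r ->
  (legendre f y <= (1 + 2 * r)%:E * supball f (r + 1))%E ->
  ((enorm y)%:E <= 2%:E * supball f (r + 1))%E.
Proof.
move=> [_ [f00 _]] r0 L.
have r1 : 0 <= r + 1 by lra.
case: (@sup_cases f _ r1) => [->|[m [E [m0 hm]]]].
  by rewrite mulry gtr0_sg // mul1e leey.
rewrite E -EFinM lee_fin.
have [->|y0] := eqVneq y 0; first by rewrite enorm0; lra.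
have := le_trans (@lower_y f r y m r0 y0 hm) L; rewrite E -EFinM lee_fin => h.
have ny := @enorm_ge0 _ _ y.
nra.
Qed.

End H3.
Theorem lemma2p5 (R : realType) (n : nat) (f : 'rV[R]_n -> R) :
  Conv0p f -> smooth f ->
  (forall x0 y : 'rV[R]_n, y != 0 -> is_gradient f x0 y ->
     (`| legendre f y | <= (1 + 2 * enorm x0)%:E * supball f (enorm x0 + 1))%E /\
     ((enorm y)%:E <= 2%:E * supball f (enorm x0 + 1))%E) /\
  (forall (r : R) (y : 'rV[R]_n), 0 <= r ->
     (legendre f y <= (1 + 2 * r)%:E * supball f (r + 1))%E ->
     ((enorm y)%:E <= 2%:E * supball f (r + 1))%E).
Proof.
move=> cf0 _; split; last by move=> r y r0 L; exact: (@part2 _ _).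
move=> x0 y y0 g; have [cf [f00 _]] := cf0.
have r0 : 0 <= enorm x0 := enorm_ge0 _ _ x0.
have Lup : (legendre f y <= (dotv y x0 - f x0)%:E)%E.
  apply: (@legendre_le _ _) => x; have := @grad_ineq _ _ _ _ _ cf g x.
  rewrite dotvDr dotvNr; lra.
have Llow : (0 <= legendre f y)%E.
  by have := @legendre_ge _ _ f y 0; rewrite dotv0r f00 subrr.
have r1 : 0 <= enorm x0 + 1 by lra.
have key : (legendre f y <= (1 + 2 * enorm x0)%:E * supball f (enorm x0 + 1))%E.
  case: (@sup_cases _ _ f _ r1) => [->|[m [E [m0 hm]]]].
    by rewrite mulry gtr0_sg ?mul1e ?leey //; lra.
  rewrite E -EFinM; apply: (le_trans Lup); rewrite lee_fin.
  have := le_trans (@lower_y _ _ f _ _ _ r0 y0 hm) Lup; rewrite lee_fin => h1.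
  have := @CS _ _ y x0; have := @enorm_ge0 _ _ y.
  have : `|f x0| <= m by apply: hm; lra.
  move=> /ler_normlP [] ? ? ? ?; nra.
split; first by rewrite gee0_abs.
exact: (@part2 _ _).
Qed.
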